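(* Let $(F_n)_{n\ge 0}$ be the Fibonacci numbers, $F_0=0$, $F_1=F_2=1$, $F_{n+2}=F_{n+1}+F_n$. Let $\mathbf{P}$ be the Fibonacci cobweb poset on the set of positive integers, defined as follows: for $k\ge 1$ the $k$-th level is the set $\Phi_k=\{x\in\mathbb{N}: F_{k+1}\le x\le F_{k+2}-1\}$ (so $|\Phi_k|=F_k$, and the levels partition $\{1,2,3,\dots\}$), and for $x\in\Phi_k$, $y\in\Phi_n$ we have $x\le y$ in $\mathbf{P}$ if and only if $x=y$ or $k<n$. Let $\mu$ be the M\''obius function of $\mathbf{P}$, i.e. the function on pairs of elements of $\mathbf{P}$ determined by $\mu(x,x)=1$ for all $x$, $\mu(x,y)=-\sum_{z:\,x\le z<y}\mu(x,z)$ for $x<y$, and $\mu(x,y)=0$ when $x\not\le y$. Then for $x\in\Phi_k$ and $y\in\Phi_n$: $$\mu(x,y)=\begin{cases} 0 & \text{if } x>y \text{ (as integers)},\\ 1 & \text{if } x=y,\\ 0 & \text{if } n=k \text{ and } x\neq y,\\ -1 & \text{if } n=k+1,\\ -\prod_{l=k+1}^{n-1}(1-F_l) & \text{if } n>k+1.\end{cases}$$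
   Context: The M\''obius function $\mu$ of a locally finite poset is the inverse of its zeta function $\zeta$ ($\zeta(x,y)=1$ if $x\le y$, $0$ otherwise) in the incidence algebra, where the product is $(f*g)(x,y)=\sum_{x\le z\le y}f(x,z)g(z,y)$; equivalently it is given by the recursion stated in the claim. In the cobweb poset, every element of level $k$ is below every element of every higher level, and distinct elements of the same level are incomparable. *)

(* Defs.v *)
From mathcomp Require Import all_boot all_order all_algebra.
Set Implicit Arguments. Unset Strict Implicit. Unset Printing Implicit Defensive.
Import GRing.Theory Num.Theory.

Fixpoint fib (n : nat) : nat :=
  match n with
  | 0 => 0
  | 1 => 1
  | (m.+1 as p).+1 => fib p + fib m
  end.

Definition in_level (k x : nat) : bool :=
  (1 <= k) && (fib k.+1 <= x) && (x < fib k.+2).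

(* strict order of the cobweb poset on positive integers:
   x < y iff x in Phi_k, y in Phi_n with k < n.
   (The level of any x is at most x, so the bounded quantifiers lose nothing.) *)
Definition cobweb_lt (x y : nat) : bool :=
  [exists k : 'I_x.+1, exists n : 'I_y.+1,
     [&& in_level k x, in_level n y & (k < n)%N]].

Definition cobweb_le (x y : nat) : bool := (x == y) || cobweb_lt x y.

(* mu is the Moebius function of the cobweb poset (on elements 1,2,3,...).
   Any z with z < y in P satisfies z < y as integers, so the sum over
   {z : x <= z < y} is taken over z in [1, y). *)
Definition is_cobweb_mobius (mu : nat -> nat -> int) : Prop :=
  (forall x, (0 < x)%N -> mu x x = 1%R) /\
  (forall x y, (0 < x)%N -> (0 < y)%N -> cobweb_lt x y ->
     mu x y = (- \sum_(1 <= z < y | cobweb_le x z && cobweb_lt z y) mu x z)%R) /\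
  (forall x y, (0 < x)%N -> (0 < y)%N -> ~~ cobweb_le x y -> mu x y = 0%R).

(* Main.v *)
Require Import Defs.
From mathcomp Require Import all_boot all_order all_algebra.
From mathcomp Require Import zify.
Import GRing.Theory Num.Theory.
Set Implicit Arguments. Unset Strict Implicit.

Lemma fibSS n : fib n.+2 = fib n.+1 + fib n.
Proof. by []. Qed.

Lemma fib_mono m n : (m <= n)%N -> (fib m <= fib n)%N.
Proof.
move=> mn; apply: (homo_leq (r := leq)) => //; first exact: leq_trans.
by case=> [|p] //; rewrite fibSS leq_addr.
Qed.

Lemma fib_pos n : (0 < n)%N -> (0 < fib n)%N.
Proof.
move=> n0; have := fib_mono n0; by [].
Qed.

Lemma fib_ge n : (n <= fib n.+1)%N.
Proof.
elim: n => [|n IH] //; rewrite fibSS; case: n IH => [|n] // IH.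
have := fib_pos (ltn0Sn n); lia.
Qed.

Lemma level_pos k x : in_level k x -> (0 < x)%N.
Proof.
move=> /andP[/andP[k1 h1] h2]; have := fib_mono (m:=2) (n:=k.+1) k1; have : fib 2 = 1 by []; lia.
Qed.

Lemma level_lt k n x y : in_level k x -> in_level n y -> (k < n)%N -> (x < y)%N.
Proof.
move=> /andP[/andP[k1 h1] h2] /andP[/andP[n1 h3] h4] kn.
have := fib_mono (m:=k.+2) (n:=n.+1) kn; lia.
Qed.

Lemma level_uniq k n x : in_level k x -> in_level n x -> k = n.
Proof.
move=> hk hn; case: (ltngtP k n) => // kn.
- by have := level_lt hk hn kn; rewrite ltnn.
- by have := level_lt hn hk kn; rewrite ltnn.
Qed.

Lemma level_le k x : in_level k x -> (k <= x)%N.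
Proof. move=> /andP[/andP[k1 h1] h2]; have := fib_ge k; lia. Qed.

Lemma cobweb_ltE k n x y : in_level k x -> in_level n y -> cobweb_lt x y = (k < n)%N.
Proof.
move=> hx hy; apply/idP/idP.
- case/existsP=> k' /existsP[n' /and3P[h1 h2 h3]].
  by rewrite -(level_uniq h1 hx) -(level_uniq h2 hy).
- move=> kn; apply/existsP; exists (Ordinal (n:=x.+1) (m:=k) (level_le hx)).
  apply/existsP; exists (Ordinal (n:=y.+1) (m:=n) (level_le hy)).
  by rewrite /= hx hy kn.
Qed.

Local Open Scope ring_scope.

Lemma sum_levels (f : nat -> int) m : (1 <= m)%N ->
  \sum_(1 <= z < fib m.+1) f z =
  \sum_(1 <= j < m) \sum_(fib j.+1 <= z < fib j.+2) f z.
Proof.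
elim: m => [//|m IH] _.
case: m IH => [|m] IH; first by rewrite !big_geq.
rewrite big_nat_recr //= -IH //.
have h1 : (1 <= fib m.+2)%N := fib_pos (n:=m.+2) isT.
have h2 := fib_mono (m:=m.+2) (n:=m.+3) (leqnSn _).
by rewrite (big_cat_nat h1 h2).
Qed.

Definition P k j := \prod_(k.+1 <= l < j) (1 - (fib l)%:Z).

Lemma sumP k n : (k < n)%N ->
  1 + \sum_(k.+1 <= j < n) (fib j)%:Z * (- P k j) = P k n.
Proof.
elim: n => [//|n IH]; rewrite ltnS leq_eqVlt => /orP[/eqP->|kn].
  by rewrite big_geq // /P big_geq.
rewrite big_nat_recr //= addrA IH // /P big_nat_recr //=.
by rewrite mulrBr mulr1 mulrN mulrC.
Qed.

Lemma sum_one a b x (c : int) : (a <= x < b)%N ->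
  \sum_(a <= z < b) (if x == z then c else 0) = c.
Proof.
move=> /andP[ax xb].
rewrite (@big_cat_nat _ _ _ x) //= ?(ltnW xb) // [\sum_(x <= i < b) _]big_ltn // eqxx.
rewrite big_nat_cond big1 ?add0r; last first.
  by move=> i /andP[/andP[_ /ltn_eqF]]; rewrite eq_sym => ->.
rewrite big_nat_cond big1 ?addr0 // => i /andP[/andP[/ltn_eqF]].
by rewrite eq_sym => ->.
Qed.

Lemma mu_gt mu (hmu : is_cobweb_mobius mu) k x (hx : in_level k x) :
  forall n y, (k < n)%N -> in_level n y -> mu x y = - P k n.
Proof.
case: hmu => h1 [h2 _].
have k1 : (1 <= k)%N by move: hx => /andP[/andP[]].
elim/ltn_ind => n IH y kn hy.
rewrite h2 ?(level_pos hx) ?(level_pos hy) ?(cobweb_ltE hx hy) //.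
congr (- _); rewrite big_mkcond /=.
have n1 : (1 <= n)%N by apply: leq_trans kn.
have hf1 : (1 <= fib n.+1)%N := fib_pos (n:=n.+1) isT.
have hf2 : (fib n.+1 <= y)%N by move: hy => /andP[/andP[]].
rewrite (big_cat_nat hf1 hf2).
rewrite [\sum_(fib n.+1 <= i < y) _]big_nat_cond [\sum_(fib n.+1 <= i < y | _) _]big1 ?addr0; last first.
  move=> z /andP[/andP[z1 z2] _].
  have hz : in_level n z.
    by move: hy => /andP[_ hy2]; rewrite /in_level n1 z1 /= (ltn_trans z2 hy2).
  by rewrite (cobweb_ltE hz hy) ltnn andbF.
rewrite ?addr0 sum_levels //.
have E : forall j, (1 <= j < n)%N ->
   \sum_(fib j.+1 <= z < fib j.+2)
      (if cobweb_le x z && cobweb_lt z y then mu x z else 0) =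
   if (j < k)%N then 0 else if j == k then 1 else (fib j)%:Z * - P k j.
  move=> j /andP[j1 jn].
  have lz : forall z, (fib j.+1 <= z < fib j.+2)%N -> in_level j z.
    by move=> z /andP[z1 z2]; rewrite /in_level j1 z1 z2.
  have ltzy : forall z, (fib j.+1 <= z < fib j.+2)%N -> cobweb_lt z y.
    by move=> z /lz hz; rewrite (cobweb_ltE hz hy).
  case: (ltngtP j k) => [jk|kj|ejk].
  - rewrite big_nat_cond big1 // => z /andP[/lz hz _].
    rewrite /cobweb_le (cobweb_ltE hx hz) ltnNge (ltnW jk) orbF.
    have -> : (x == z) = false.
      apply/eqP => e; move: hz; rewrite -e => /(level_uniq hx) e2.
      by move: jk; rewrite e2 ltnn.
    by [].
  - idtac.
    rewrite (eq_big_nat _ _ (F2 := fun _ => - P k j)).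
      rewrite sumr_const_nat fibSS addKn -mulr_natl natz //.
    move=> z hz; rewrite (ltzy _ hz) andbT /cobweb_le (cobweb_ltE hx (lz _ hz)) kj orbT.
    exact: IH j jn z kj (lz _ hz).
  - subst j.
    rewrite (eq_big_nat _ _ (F2 := fun z => if x == z then 1 else 0)).
      by apply: sum_one; move: hx => /andP[/andP[_ ->] ->].
    move=> z hz; rewrite (ltzy _ hz) andbT /cobweb_le (cobweb_ltE hx (lz _ hz)) ltnn orbF.
    by case: eqP => // <-; apply: h1; apply: level_pos hx.
rewrite (eq_big_nat _ _ E) Monoid.mulm1 (big_cat_nat k1 (ltnW kn)).
rewrite [\sum_(k <= i < n) _]big_ltn // ltnn eqxx.
rewrite big_nat_cond big1 ?Monoid.mul1m; last by move=> i /andP[/andP[_ ->]].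
rewrite (eq_big_nat _ _ (F2 := fun i => (fib i)%:Z * - P k i)); first exact: sumP.
by move=> i /andP[ki _]; rewrite ltnNge (ltnW ki) /= gtn_eqF.
Qed.

Close Scope ring_scope.
Unset Implicit Arguments. Set Strict Implicit.

Theorem mainTheorem1 (mu : nat -> nat -> int) (hmu : is_cobweb_mobius mu)
  (k n x y : nat) (hx : in_level k x) (hy : in_level n y) :
  mu x y =
    (if (y < x)%N then 0
     else if x == y then 1
     else if n == k then 0
     else if n == k.+1 then -1
     else - \prod_(k.+1 <= l < n) (1 - (fib l)%:Z))%R.
Proof.
have hx0 := level_pos hx; have hy0 := level_pos hy.
have [h1 [h2 h3]] := hmu.
case: (ltnP y x) => [yx|xy].
  apply: h3 => //; rewrite /cobweb_le negb_or gtn_eqF //= (cobweb_ltE hx hy).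
  by apply/negP => kn; have := level_lt hx hy kn; rewrite ltnNge (ltnW yx).
case: eqP => [<-|nxy]; first exact: h1.
case: eqP => [enk|nnk].
  subst n; apply: h3 => //; rewrite /cobweb_le negb_or (cobweb_ltE hx hy) ltnn andbT.
  by apply/eqP.
have kn : (k < n)%N.
  case: (ltngtP k n) => // [nk|enk]; last by rewrite enk in nnk.
  by have := level_lt hy hx nk; rewrite ltnNge xy.
rewrite (mu_gt hmu hx kn hy); case: eqP => [->|_] //.
by rewrite /P big_geq.
Qed.
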